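(* Consider a discounted Markov decision problem and the policy mirror descent method as described in the context, with $\pi^{(0)}\in\operatorname{rint}\Pi$ and constant step size $\eta_k=\eta>0$ for all $k\ge0$. Then for any $\rho\in\Delta(\mathcal{S})$ and all $k\ge0$, \[ V_\rho(\pi^{(k)})-V_\rho^\star\le\frac1{k+1}\left(\frac{D^\star_0}{\eta(1-\gamma)}+\frac1{(1-\gamma)^2}\right). \]
   Context: A discounted Markov decision problem (cost-minimization form): finite state set $\mathcal{S}$, finite action set $\mathcal{A}$, transition probabilities $P(s'|s,a)$, cost $R:\mathcal{S}\times\mathcal{A}\to[0,1]$, discount $\gamma\in[0,1)$. Policies $\Pi=\Delta(\mathcal{A})^{|\mathcal{S}|}$, $\pi=(\pi_s)_s$ with $\pi_s\in\Delta(\mathcal{A})$; $\operatorname{rint}\Pi$ is the set of policies with all entries $\pi_{s,a}>0$. $V_s(\pi)=\mathbf{E}\bigl[\sum_{t\ge0}\gamma^tR(s_t,a_t)\mid s_0=s\bigr]$ with $a_t\sim\pi_{s_t}$, $s_{t+1}\sim P(\cdot|s_t,a_t)$; $V_\rho(\pi)=\sum_s\rho_sV_s(\pi)$; $V^\star_\rho=\min_{\pi\in\Pi}V_\rho(\pi)$; $\pi^\star$ denotes a policy minimizing $V_s$ simultaneously for all $s$. $Q_{s,a}(\pi)=R_{s,a}+\gamma\sum_{s'}P(s'|s,a)V_{s'}(\pi)$, $Q_s(\pi)\in\mathbf{R}^{|\mathcal{A}|}$. Discounted state visitation: $d_{s,s'}(\pi)=(1-\gamma)\sum_{t\ge0}\gamma^t\Pr^\pi(s_t=s'\mid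 s_0=s)$, $d_{\rho,s'}(\pi)=\sum_s\rho_sd_{s,s'}(\pi)$. Bregman divergence: $h:\mathbf{R}^{|\mathcal{A}|}\to\mathbf{R}\cup\{+\infty\}$ is a convex function of Legendre type (proper, closed, essentially smooth, strictly convex on the relative interior of its domain) with $\Delta(\mathcal{A})\subseteq\operatorname{dom}h$ and $\operatorname{rint}\Delta(\mathcal{A})\subseteq\operatorname{rint}\operatorname{dom}h$ (e.g. $h=\frac12\|\cdot\|_2^2$, or negative entropy $h(p)=\sum_ap_a\log p_a$); $D(p,p')=h(p)-h(p')-\langle\nabla h(p'),p-p'\rangle$ for $p\in\operatorname{dom}h$, $p'\in\operatorname{rint}\operatorname{dom}h$. Policy mirror descent: given $\pi^{(0)}$ and step sizes $\eta_k>0$, for each $s\in\mathcal{S}$, $\pi^{(k+1)}_s=\arg\min_{p\in\Delta(\mathcal{A})}\{\eta_k\langle Q_s(\pi^{(k)}),p\rangle+D(p,\pi^{(k)}_s)\}$ (the iterates are well defined and remain in $\operatorname{rint}\operatorname{dom}h$). Notation: $D^\star_k=\sum_{s\in\mathcal{S}}d_{\rho,s}(\pi^\star)D(\pi^\star_s,\pi^{(k)}_s)$. *)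

(* Defs.v *)
From HB Require Import structures.
From mathcomp Require Import all_boot all_order all_algebra.
From mathcomp Require Import all_classical all_reals all_analysis.
Set Implicit Arguments. Unset Strict Implicit. Unset Printing Implicit Defensive.
Import Order.TTheory GRing.Theory Num.Theory.
Import numFieldNormedType.Exports.
Local Open Scope classical_set_scope.
Local Open Scope ring_scope.

(* Conventions:
   - the finite state set is an arbitrary finType S;
   - the finite action set is 'I_m (m actions), so that a distribution over
     actions is a row vector p : 'rV[R]_m (entry p ord0 a), living in the
     normed space R^|A| on which the Bregman generator h is defined;
   - a policy is pi : S -> 'rV[R]_m. *)

Definition in_simplex {R : realType} {m : nat} (p : 'rV[R]_m) : Prop :=
  (forall a : 'I_m, 0 <= p ord0 a) /\ \sum_(a < m) p ord0 a = 1.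

Definition in_rint_simplex {R : realType} {m : nat} (p : 'rV[R]_m) : Prop :=
  in_simplex p /\ (forall a : 'I_m, 0 < p ord0 a).

Definition is_policy {R : realType} {S : finType} {m : nat}
  (pi : S -> 'rV[R]_m) : Prop := forall s, in_simplex (pi s).

Definition is_rint_policy {R : realType} {S : finType} {m : nat}
  (pi : S -> 'rV[R]_m) : Prop := forall s, in_rint_simplex (pi s).

Definition is_state_distr {R : realType} {S : finType} (rho : S -> R) : Prop :=
  (forall s, 0 <= rho s) /\ \sum_s rho s = 1.

Definition is_MDP {R : realType} {S : finType} {m : nat}
  (P : S -> 'I_m -> S -> R) (c : S -> 'I_m -> R) (gamma : R) : Prop :=
  [/\ (forall s a s', 0 <= P s a s'),
      (forall s a, \sum_s' P s a s' = 1),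
      (forall s a, 0 <= c s a <= 1) &
      0 <= gamma < 1].

Fixpoint state_prob {R : realType} {S : finType} {m : nat}
  (P : S -> 'I_m -> S -> R) (pi : S -> 'rV[R]_m) (s : S) (t : nat) : S -> R :=
  match t with
  | 0 => fun s' => (s' == s)%:R
  | t.+1 => fun s' =>
      \sum_(x : S) state_prob P pi s t x * \sum_(a < m) pi x ord0 a * P x a s'
  end.

Definition exp_cost {R : realType} {S : finType} {m : nat}
  (P : S -> 'I_m -> S -> R) (c : S -> 'I_m -> R) (pi : S -> 'rV[R]_m)
  (s : S) (t : nat) : R :=
  \sum_(x : S) state_prob P pi s t x * \sum_(a < m) pi x ord0 a * c x a.

Definition Vs {R : realType} {S : finType} {m : nat}
  (P : S -> 'I_m -> S -> R) (c : S -> 'I_m -> R) (gamma : R)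
  (pi : S -> 'rV[R]_m) (s : S) : R :=
  limn (fun n => \sum_(0 <= t < n) gamma ^+ t * exp_cost P c pi s t).

Definition Vrho {R : realType} {S : finType} {m : nat}
  (P : S -> 'I_m -> S -> R) (c : S -> 'I_m -> R) (gamma : R)
  (rho : S -> R) (pi : S -> 'rV[R]_m) : R :=
  \sum_s rho s * Vs P c gamma pi s.

(* V^*_rho = min over policies of V_rho (written as the infimum) *)
Definition Vstar {R : realType} {S : finType} {m : nat}
  (P : S -> 'I_m -> S -> R) (c : S -> 'I_m -> R) (gamma : R)
  (rho : S -> R) : R :=
  inf [set Vrho P c gamma rho pi | pi in [set pi | is_policy pi]].

Definition is_optimal_policy {R : realType} {S : finType} {m : nat}
  (P : S -> 'I_m -> S -> R) (c : S -> 'I_m -> R) (gamma : R)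
  (pistar : S -> 'rV[R]_m) : Prop :=
  is_policy pistar /\
  forall pi, is_policy pi -> forall s, Vs P c gamma pistar s <= Vs P c gamma pi s.

Definition Qsa {R : realType} {S : finType} {m : nat}
  (P : S -> 'I_m -> S -> R) (c : S -> 'I_m -> R) (gamma : R)
  (pi : S -> 'rV[R]_m) (s : S) (a : 'I_m) : R :=
  c s a + gamma * \sum_s' P s a s' * Vs P c gamma pi s'.

Definition dvisit {R : realType} {S : finType} {m : nat}
  (P : S -> 'I_m -> S -> R) (gamma : R) (pi : S -> 'rV[R]_m) (s s' : S) : R :=
  (1 - gamma) *
  limn (fun n => \sum_(0 <= t < n) gamma ^+ t * state_prob P pi s t s').

Definition dvisit_rho {R : realType} {S : finType} {m : nat}
  (P : S -> 'I_m -> S -> R) (gamma : R) (pi : S -> 'rV[R]_m)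
  (rho : S -> R) (s' : S) : R :=
  \sum_s rho s * dvisit P gamma pi s s'.

Definition edom {R : realType} {m : nat} (h : 'rV[R]_m -> \bar R) :
  set 'rV[R]_m := [set x | (h x < +oo)%E].

(* relative interior of dom h; for a Legendre function int(dom h) is
   nonempty, so the relative interior is the interior *)
Definition rint_dom {R : realType} {m : nat} (h : 'rV[R]_m -> \bar R) :
  set 'rV[R]_m := interior (edom h).

Definition hfin {R : realType} {m : nat} (h : 'rV[R]_m -> \bar R) :
  'rV[R]_m -> R := fun x => fine (h x).

Definition grad {R : realType} {m : nat} (h : 'rV[R]_m -> \bar R)
  (x : 'rV[R]_m) : 'rV[R]_m :=
  \row_(i < m) ('D_(delta_mx ord0 i) (hfin h) x).

Definition proper_fun {R : realType} {m : nat} (h : 'rV[R]_m -> \bar R) : Prop :=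
  (forall x, h x != -oo%E) /\ (exists x, (h x < +oo)%E).

Definition closed_fun {R : realType} {m : nat} (h : 'rV[R]_m -> \bar R) : Prop :=
  closed [set xr : 'rV[R]_m * R | (h xr.1 <= xr.2%:E)%E].

Definition convex_fun {R : realType} {m : nat} (h : 'rV[R]_m -> \bar R) : Prop :=
  forall (x y : 'rV[R]_m) (t : R), 0 < t < 1 ->
    (h (t *: x + (1 - t) *: y)%R <= t%:E * h x + (1 - t)%:E * h y)%E.

Definition strictly_convex_on {R : realType} {m : nat}
  (h : 'rV[R]_m -> \bar R) (C : set 'rV[R]_m) : Prop :=
  forall (x y : 'rV[R]_m) (t : R), C x -> C y -> x != y -> 0 < t < 1 ->
    (h (t *: x + (1 - t) *: y)%R < t%:E * h x + (1 - t)%:E * h y)%E.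

Definition essentially_smooth {R : realType} {m : nat}
  (h : 'rV[R]_m -> \bar R) : Prop :=
  [/\ rint_dom h !=set0,
      (forall x, rint_dom h x -> differentiable (hfin h) x) &
      (forall (u : nat -> 'rV[R]_m) (x : 'rV[R]_m),
          (forall n, rint_dom h (u n)) -> u @ \oo --> x ->
          closure (rint_dom h) x -> ~ rint_dom h x ->
          (fun n => `|grad h (u n)|) @ \oo --> +oo)].

Definition legendre {R : realType} {m : nat} (h : 'rV[R]_m -> \bar R) : Prop :=
  [/\ proper_fun h, closed_fun h, convex_fun h, essentially_smooth h &
      strictly_convex_on h (rint_dom h)].

Definition bregman {R : realType} {m : nat} (h : 'rV[R]_m -> \bar R)
  (p p' : 'rV[R]_m) : R :=
  hfin h p - hfin h p' - \sum_(i < m) grad h p' ord0 i * (p ord0 i - p' ord0 i).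

Definition Qdot {R : realType} {S : finType} {m : nat}
  (P : S -> 'I_m -> S -> R) (c : S -> 'I_m -> R) (gamma : R)
  (pi : S -> 'rV[R]_m) (s : S) (p : 'rV[R]_m) : R :=
  \sum_(a < m) Qsa P c gamma pi s a * p ord0 a.

Definition is_PMD_sequence {R : realType} {S : finType} {m : nat}
  (P : S -> 'I_m -> S -> R) (c : S -> 'I_m -> R) (gamma : R)
  (h : 'rV[R]_m -> \bar R) (eta : nat -> R) (pi : nat -> S -> 'rV[R]_m) : Prop :=
  forall k s,
    in_simplex (pi k.+1 s) /\
    forall p, in_simplex p ->
      eta k * Qdot P c gamma (pi k) s (pi k.+1 s) + bregman h (pi k.+1 s) (pi k s)
      <= eta k * Qdot P c gamma (pi k) s p + bregman h p (pi k s).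

Definition Dstar {R : realType} {S : finType} {m : nat}
  (P : S -> 'I_m -> S -> R) (gamma : R) (h : 'rV[R]_m -> \bar R)
  (rho : S -> R) (pistar : S -> 'rV[R]_m) (pik : S -> 'rV[R]_m) : R :=
  \sum_s dvisit_rho P gamma pistar rho s * bregman h (pistar s) (pik s).

(* Main.v *)
Require Import Defs.
From HB Require Import structures.
From mathcomp Require Import all_boot all_order all_algebra.
From mathcomp Require Import all_classical all_reals all_analysis.
From mathcomp Require Import ring lra.
Import Order.TTheory GRing.Theory Num.Theory.
Import numFieldNormedType.Exports.
Local Open Scope classical_set_scope.
Local Open Scope ring_scope.

Section Seq.
Variable R : realType.

Lemma le_cvg (u : R^nat) (l b : R) : u @ \oo --> l -> (forall n, u n <= b) -> l <= b.
Proof.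
move=> hu hb; rewrite -(cvg_lim _ hu) //; apply: limr_le.
  by apply/cvg_ex; exists l.
by apply: nearW => n; exact: hb.
Qed.

Lemma ge_cvg (u : R^nat) (l b : R) : u @ \oo --> l -> (forall n, b <= u n) -> b <= l.
Proof.
move=> hu hb; rewrite -(cvg_lim _ hu) //; apply: limr_ge.
  by apply/cvg_ex; exists l.
by apply: nearW => n; exact: hb.
Qed.

Lemma cvg_sum_seq (I : Type) (r : seq I) (u : I -> R^nat) (l : I -> R) :
  (forall i, u i @ \oo --> l i) ->
  (fun n => \sum_(i <- r) u i n) @ \oo --> \sum_(i <- r) l i.
Proof.
move=> hu; elim: r => [|i r IH].
  rewrite big_nil; under eq_fun do rewrite big_nil; exact: cvg_cst.
rewrite big_cons; under eq_fun do rewrite big_cons.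
exact: cvgD.
Qed.

Lemma cvg_uniq (u : R^nat) (a b : R) : u @ \oo --> a -> u @ \oo --> b -> a = b.
Proof. move=> ha hb; by rewrite -(cvg_lim _ ha) // -(cvg_lim _ hb). Qed.

End Seq.
Arguments le_cvg {R u l b}.
Arguments ge_cvg {R u l b}.
Arguments cvg_uniq {R u a b}.
Arguments cvg_sum_seq {R I r u l}.
Section MDP.
Variables (R : realType) (S : finType) (m : nat)
  (P : S -> 'I_m -> S -> R) (c : S -> 'I_m -> R) (gamma : R).
Hypothesis HP0 : forall s a s', 0 <= P s a s'.
Hypothesis HP1 : forall s a, \sum_s' P s a s' = 1.
Hypothesis Hc : forall s a, 0 <= c s a <= 1.
Hypothesis Hg0 : 0 <= gamma.
Hypothesis Hg1 : gamma < 1.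

Definition Ppi (pi : S -> 'rV[R]_m) x y := \sum_(a < m) pi x ord0 a * P x a y.
Definition cpi (pi : S -> 'rV[R]_m) x := \sum_(a < m) pi x ord0 a * c x a.

Lemma geo_sum n : (1 - gamma) * \sum_(0 <= t < n) gamma ^+ t = 1 - gamma ^+ n.
Proof.
elim: n => [|n IH]; first by rewrite big_geq // expr0 mulr0 subrr.
by rewrite big_nat_recr //= mulrDr IH exprS; ring.
Qed.

Lemma geo_sum_le n : \sum_(0 <= t < n) gamma ^+ t <= (1 - gamma)^-1.
Proof.
have hg : 0 < 1 - gamma by rewrite subr_gt0.
rewrite -[X in _ <= X]mulr1 ler_pdivlMl // geo_sum lerBlDr lerDl; exact: exprn_ge0.
Qed.

Lemma series_prop (u : nat -> R) (B : R) : (forall t, 0 <= u t <= B) ->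
  let sn := fun n => \sum_(0 <= t < n) gamma ^+ t * u t in
  sn @ \oo --> limn sn /\ 0 <= limn sn /\ limn sn <= B / (1 - gamma)
  /\ (forall n, 0 <= sn n).
Proof.
move=> hu sn.
have hg : 0 < 1 - gamma by rewrite subr_gt0.
have sn0 : forall n, 0 <= sn n.
  move=> n; apply: sumr_ge0 => t _; apply: mulr_ge0; first exact: exprn_ge0.
  by case/andP: (hu t).
have snB : forall n, sn n <= B / (1 - gamma).
  move=> n; apply: (@le_trans _ _ (\sum_(0 <= t < n) gamma ^+ t * B)).
    apply: ler_sum => t _; apply: ler_wpM2l; first exact: exprn_ge0.
    by case/andP: (hu t).
  rewrite -mulr_suml mulrC; apply: ler_wpM2l; first by case/andP: (hu 0%N) => h1 h2; exact: le_trans h2.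
  exact: geo_sum_le.
have cv : sn @ \oo --> limn sn.
  apply: nondecreasing_is_cvgn.
    apply/nondecreasing_seqP => n; rewrite /sn big_nat_recr //= lerDl.
    apply: mulr_ge0; first exact: exprn_ge0. by case/andP: (hu n).
  by exists (B / (1 - gamma)) => _ [n _ <-].
split=> //; split; first exact: (ge_cvg cv sn0).
split=> //; exact: (le_cvg cv snB).
Qed.


Section Policy.
Variable pol : S -> 'rV[R]_m.
Hypothesis hpi : is_policy pol.

Lemma Ppi_ge0 x y : 0 <= Ppi pol x y.
Proof. apply: sumr_ge0 => a _; apply: mulr_ge0 => //; exact: (hpi x).1. Qed.

Lemma Ppi_sum x : \sum_y Ppi pol x y = 1.
Proof.
rewrite /Ppi exchange_big /=.
under eq_bigr do rewrite -mulr_sumr HP1 mulr1.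
exact: (hpi x).2.
Qed.

Lemma cpi_bnd x : 0 <= cpi pol x <= 1.
Proof.
apply/andP; split.
  apply: sumr_ge0 => a _; apply: mulr_ge0; first exact: (hpi x).1.
  by case/andP: (Hc x a).
rewrite -(hpi x).2; apply: ler_sum => a _.
rewrite -[X in _ <= X]mulr1; apply: ler_wpM2l; first exact: (hpi x).1.
by case/andP: (Hc x a).
Qed.

Lemma sp_S s t z : state_prob P pol s t.+1 z = \sum_x state_prob P pol s t x * Ppi pol x z.
Proof. by []. Qed.

Lemma sp_ge0 s t y : 0 <= state_prob P pol s t y.
Proof.
elim: t y => [|t IH] y; first by rewrite /= ler0n.
rewrite sp_S; apply: sumr_ge0 => x _; apply: mulr_ge0 => //; exact: Ppi_ge0.
Qed.

Lemma sum_delta (F : S -> R) s : \sum_y (y == s)%:R * F y = F s.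
Proof.
rewrite (bigD1 s) //= eqxx mul1r big1 ?addr0 // => y /negbTE ->; by rewrite mul0r.
Qed.

Lemma sum_delta' (F : S -> R) s : \sum_y F y * (s == y)%:R = F s.
Proof.
rewrite (bigD1 s) //= eqxx mulr1 big1 ?addr0 // => y; rewrite eq_sym => /negbTE ->; by rewrite mulr0.
Qed.

Lemma sp_sum s t : \sum_y state_prob P pol s t y = 1.
Proof.
elim: t => [|t IH].
  by rewrite /= (bigD1 s) //= eqxx big1 ?addr0 // => y /negbTE ->.
under eq_bigr do rewrite sp_S.
rewrite exchange_big /=; rewrite -IH; apply: eq_bigr => x _.
by rewrite -mulr_sumr Ppi_sum mulr1.
Qed.

Lemma sp_le1 s t y : state_prob P pol s t y <= 1.
Proof.
rewrite -(sp_sum s t) (bigD1 y) //= lerDl; apply: sumr_ge0 => *; exact: sp_ge0.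
Qed.

Lemma ec_def s t : exp_cost P c pol s t = \sum_x state_prob P pol s t x * cpi pol x.
Proof. by []. Qed.

Lemma ec_bnd s t : 0 <= exp_cost P c pol s t <= 1.
Proof.
rewrite ec_def; apply/andP; split.
  apply: sumr_ge0 => x _; apply: mulr_ge0; [exact: sp_ge0 | by case/andP: (cpi_bnd x)].
rewrite -(sp_sum s t); apply: ler_sum => x _.
rewrite -[X in _ <= X]mulr1; apply: ler_wpM2l; first exact: sp_ge0.
by case/andP: (cpi_bnd x).
Qed.

Lemma sp_first s t z :
  state_prob P pol s t.+1 z = \sum_y Ppi pol s y * state_prob P pol y t z.
Proof.
elim: t z => [|t IH] z.
  rewrite sp_S /=; under eq_bigr do rewrite /=.
  by rewrite sum_delta; under [RHS]eq_bigr do rewrite /=; rewrite sum_delta'.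
rewrite sp_S; under eq_bigr do rewrite IH mulr_suml.
rewrite exchange_big /=; apply: eq_bigr => y _.
rewrite mulr_sumr; apply: eq_bigr => x _; by rewrite mulrA.
Qed.

Lemma ec_first s t :
  exp_cost P c pol s t.+1 = \sum_y Ppi pol s y * exp_cost P c pol y t.
Proof.
rewrite ec_def; under eq_bigr do rewrite sp_first mulr_suml.
rewrite exchange_big /=; apply: eq_bigr => y _.
rewrite ec_def mulr_sumr; apply: eq_bigr => x _; by rewrite mulrA.
Qed.

Lemma ec0 s : exp_cost P c pol s 0 = cpi pol s.
Proof. by rewrite ec_def /= sum_delta. Qed.

Definition psum s n := \sum_(0 <= t < n) gamma ^+ t * exp_cost P c pol s t.

Lemma Vs_prop s : psum s n @[n --> \oo] --> Vs P c gamma pol s /\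
  0 <= Vs P c gamma pol s /\ Vs P c gamma pol s <= 1 / (1 - gamma).
Proof.
have [h1 [h2 [h3 _]]] := series_prop (fun t => exp_cost P c pol s t) 1 (ec_bnd s).
by split; [exact: h1 | split].
Qed.

Lemma Vs_cvg s : psum s n @[n --> \oo] --> Vs P c gamma pol s.
Proof. by case: (Vs_prop s). Qed.

Lemma Vs_ge0 s : 0 <= Vs P c gamma pol s.
Proof. by case: (Vs_prop s) => _ []. Qed.

Lemma Vs_le s : Vs P c gamma pol s <= 1 / (1 - gamma).
Proof. by case: (Vs_prop s) => _ []. Qed.

Lemma psumS s n : psum s n.+1 = cpi pol s + gamma * \sum_y Ppi pol s y * psum y n.
Proof.
rewrite /psum big_nat_recl // expr0 mul1r ec0; congr (_ + _).
under eq_bigr do rewrite ec_first mulr_sumr.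
rewrite exchange_big /= mulr_sumr; apply: eq_bigr => y _.
rewrite /psum !mulr_sumr; apply: eq_bigr => t _; rewrite exprS; ring.
Qed.

Lemma bellman s : Vs P c gamma pol s = cpi pol s + gamma * \sum_y Ppi pol s y * Vs P c gamma pol y.
Proof.
apply: (@cvg_uniq _ (fun n => psum s n.+1)).
  by rewrite (cvg_shiftS (fun n => psum s n)); exact: Vs_cvg.
under eq_fun do rewrite psumS.
apply: cvgD; first exact: cvg_cst.
apply: cvgMl_tmp; apply: cvg_sum_seq => y; apply: cvgMl_tmp; exact: Vs_cvg.
Qed.

End Policy.
Arguments Ppi_ge0 {pol}.
Arguments Ppi_sum {pol}.
Arguments cpi_bnd {pol}.
Arguments sp_ge0 {pol}.
Arguments sp_sum {pol}.
Arguments sp_le1 {pol}.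
Arguments ec_bnd {pol}.
Arguments Vs_prop {pol}.
Arguments Vs_cvg {pol}.
Arguments Vs_ge0 {pol}.
Arguments Vs_le {pol}.
Arguments psumS {pol}.
Arguments bellman {pol}.

Lemma Qdot_eq pi x p : Qdot P c gamma pi x p = (\sum_a p ord0 a * c x a)
  + gamma * \sum_y (\sum_a p ord0 a * P x a y) * Vs P c gamma pi y.
Proof.
rewrite /Qdot /Qsa; under eq_bigr do rewrite mulrDl.
rewrite big_split /=; congr (_ + _); first by apply: eq_bigr => a _; rewrite mulrC.
rewrite mulr_sumr; under [RHS]eq_bigr do rewrite mulr_suml mulr_sumr.
under eq_bigr do rewrite mulr_sumr mulr_suml.
rewrite [RHS]exchange_big /=; apply: eq_bigr => a _; apply: eq_bigr => y _; ring.
Qed.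

Lemma Qdot_pol pi1 pi2 y : Qdot P c gamma pi1 y (pi2 y) =
  cpi pi2 y + gamma * \sum_z Ppi pi2 y z * Vs P c gamma pi1 z.
Proof. exact: Qdot_eq. Qed.

Lemma Qdot_self pi x : is_policy pi -> Qdot P c gamma pi x (pi x) = Vs P c gamma pi x.
Proof. by move=> hp; rewrite Qdot_pol (bellman hp). Qed.

Lemma sp_step_V pi x n (F : S -> R) :
  \sum_y state_prob P pi x n y * (\sum_z Ppi pi y z * F z)
  = \sum_z state_prob P pi x n.+1 z * F z.
Proof.
under [RHS]eq_bigr do rewrite sp_S mulr_suml.
rewrite [RHS]exchange_big /=; apply: eq_bigr => y _.
rewrite mulr_sumr; apply: eq_bigr => z _; by rewrite mulrA.
Qed.

Section PDL.
Variables pi1 pi2 : S -> 'rV[R]_m.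
Hypothesis hp1 : is_policy pi1.
Hypothesis hp2 : is_policy pi2.

Definition Adv y := Qdot P c gamma pi1 y (pi2 y) - Vs P c gamma pi1 y.

Lemma pdl_partial x n :
  \sum_(0 <= t < n) gamma ^+ t * \sum_y state_prob P pi2 x t y * Adv y
  = psum pi2 x n + gamma ^+ n * \sum_y state_prob P pi2 x n y * Vs P c gamma pi1 y
    - Vs P c gamma pi1 x.
Proof.
elim: n => [|n IH].
  by rewrite /psum !big_geq // expr0 mul1r /= sum_delta add0r subrr.
have key : \sum_y state_prob P pi2 x n y * Adv y = exp_cost P c pi2 x n
   + gamma * \sum_z state_prob P pi2 x n.+1 z * Vs P c gamma pi1 z
   - \sum_y state_prob P pi2 x n y * Vs P c gamma pi1 y.
  rewrite -sp_step_V ec_def mulr_sumr -!big_split /= -sumrB.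
  apply: eq_bigr => y _; rewrite /Adv Qdot_pol; ring.
rewrite big_nat_recr //= IH key /psum big_nat_recr //= exprS; ring.
Qed.

Lemma pdl_cvg x :
  (fun n => \sum_(0 <= t < n) gamma ^+ t * \sum_y state_prob P pi2 x t y * Adv y)
  @ \oo --> Vs P c gamma pi2 x - Vs P c gamma pi1 x.
Proof.
under eq_fun do rewrite pdl_partial.
have -> : Vs P c gamma pi2 x - Vs P c gamma pi1 x
   = Vs P c gamma pi2 x + 0 - Vs P c gamma pi1 x by rewrite addr0.
apply: cvgB; last exact: cvg_cst.
apply: cvgD; first exact: (Vs_cvg hp2).
apply: (@squeeze_cvgr _ _ _ _ (fun=> 0) (fun n => gamma ^+ n * (1 / (1 - gamma)))).
- apply: nearW => n; apply/andP; split.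
    apply: mulr_ge0; first exact: exprn_ge0.
    apply: sumr_ge0 => y _; apply: mulr_ge0; [exact: sp_ge0 | exact: Vs_ge0].
  apply: ler_wpM2l; first exact: exprn_ge0.
  apply: (@le_trans _ _ (\sum_y state_prob P pi2 x n y * (1 / (1 - gamma)))).
    apply: ler_sum => y _; apply: ler_wpM2l; [exact: sp_ge0 | exact: Vs_le].
  by rewrite -mulr_suml (sp_sum hp2) mul1r.
- exact: cvg_cst.
- rewrite -(mul0r (1 / (1 - gamma))); apply: cvgMr_tmp; apply: cvg_expr.
  by rewrite ger0_norm.
Qed.

Lemma pdl_nonpos x : (forall y, Adv y <= 0) ->
  Vs P c gamma pi2 x - Vs P c gamma pi1 x <= Adv x.
Proof.
move=> hA.
have hc := pdl_cvg x; rewrite -(cvg_shiftS) in hc.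
apply: (le_cvg hc) => n /=.
rewrite big_nat_recl // expr0 mul1r /= sum_delta gerDl.
apply: sumr_le0 => t _; apply: mulr_ge0_le0; first exact: exprn_ge0.
apply: sumr_le0 => y _; apply: mulr_ge0_le0; [exact: (sp_ge0 hp2 x t.+1 y) | exact: hA].
Qed.

Definition dps s y n := \sum_(0 <= t < n) gamma ^+ t * state_prob P pi2 s t y.

Lemma dps_prop s y : dps s y n @[n --> \oo] --> limn (dps s y) /\ 0 <= limn (dps s y).
Proof.
have hb : forall t, 0 <= state_prob P pi2 s t y <= 1.
  by move=> t; rewrite sp_ge0 // sp_le1.
have [h1 [h2 _]] := series_prop _ 1 hb; by split.
Qed.

Lemma pdl_pt s : Vs P c gamma pi2 s - Vs P c gamma pi1 s
  = \sum_y Adv y * limn (dps s y).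
Proof.
apply: cvg_uniq (pdl_cvg s) _.
have -> : (fun n => \sum_(0 <= t < n) gamma ^+ t * \sum_y state_prob P pi2 s t y * Adv y)
   = (fun n => \sum_y Adv y * dps s y n).
  apply: funext => n; rewrite /dps.
  under eq_bigr do rewrite mulr_sumr.
  rewrite exchange_big /=; apply: eq_bigr => y _.
  rewrite mulr_sumr; apply: eq_bigr => t _; ring.
apply: cvg_sum_seq => y; apply: cvgMl_tmp; exact: (dps_prop s y).1.
Qed.

Lemma pdl_avg (rho : S -> R) :
  (1 - gamma) * \sum_s rho s * (Vs P c gamma pi2 s - Vs P c gamma pi1 s)
  = \sum_y dvisit_rho P gamma pi2 rho y * Adv y.
Proof.
under eq_bigr do rewrite pdl_pt mulr_sumr.
rewrite exchange_big /= mulr_sumr; apply: eq_bigr => y _.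
rewrite /dvisit_rho /dvisit mulr_suml mulr_sumr; apply: eq_bigr => s _.
rewrite /dps; ring.
Qed.

Lemma dvisit_ge0 s y : 0 <= dvisit P gamma pi2 s y.
Proof.
apply: mulr_ge0; first by rewrite subr_ge0 ltW.
exact: (dps_prop s y).2.
Qed.

Lemma dvisit_sum s : \sum_y dvisit P gamma pi2 s y <= 1.
Proof.
have hg : 0 < 1 - gamma by rewrite subr_gt0.
rewrite /dvisit -mulr_sumr -[X in _ <= X](mulfV (lt0r_neq0 hg)).
apply: ler_wpM2l; first exact: ltW.
have hc : (fun n => \sum_y dps s y n) @ \oo --> \sum_y limn (dps s y).
  apply: cvg_sum_seq => y; exact: (dps_prop s y).1.
apply: (le_cvg hc) => n; rewrite /dps exchange_big /=.
apply: le_trans (geo_sum_le n); rewrite le_eqVlt; apply/orP; left; apply/eqP.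
apply: eq_bigr => t _; by rewrite -mulr_sumr (sp_sum hp2) mulr1.
Qed.

End PDL.

End MDP.

Lemma half_pow (R : realType) n : 0 < (2^-1 : R) ^+ n.+1 < 1.
Proof.
have h0 : (0 : R) <= 2^-1 by rewrite invr_ge0.
have h1 : (2^-1 : R) < 1 by rewrite invf_lt1 // ltr1n.
by rewrite exprn_gt0 ?invr_gt0 //= exprn_ilt1.
Qed.

Section Convex.
Variables (R : realType) (m : nat) (h : 'rV[R]_m -> \bar R).
Hypothesis hleg : legendre h.

Local Notation hf := (hfin h).

Definition dotv (w : 'I_m -> R) (v : 'rV[R]_m) := \sum_a w a * v ord0 a.
Definition gr x := fun a => grad h x ord0 a.

Lemma dotv_lin w x s v : dotv w (x + s *: v) = dotv w x + s * dotv w v.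
Proof.
rewrite /dotv mulr_sumr -big_split /=; apply: eq_bigr => a _; rewrite !mxE /=.
change (w a * (x ord0 a + s * v ord0 a) = w a * x ord0 a + s * (w a * v ord0 a)); ring.
Qed.

Lemma dotv_B w x y : dotv w (x - y) = dotv w x - dotv w y.
Proof.
rewrite /dotv -sumrB; apply: eq_bigr => a _; rewrite !mxE.
change (w a * (x ord0 a - y ord0 a) = w a * x ord0 a - w a * y ord0 a); ring.
Qed.

Lemma dotv_delta w i : dotv w (delta_mx ord0 i) = w i.
Proof.
rewrite /dotv (bigD1 i) //= mxE !eqxx mulr1 big1 ?addr0 // => a hai.
by rewrite mxE eqxx /= (negbTE hai) mulr0.
Qed.

Lemma h_fin x : edom h x -> h x = (hf x)%:E.
Proof.
case: hleg => -[hneq _] _ _ _ _ hx.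
by rewrite /hfin fineK // fin_numE hneq /= (lt_eqF hx).
Qed.

Lemma convex_real x y t : edom h x -> edom h y -> 0 < t < 1 ->
  edom h (t *: x + (1 - t) *: y) /\
  hf (t *: x + (1 - t) *: y) <= t * hf x + (1 - t) * hf y.
Proof.
move=> hx hy ht; case: hleg => _ _ hconv _ _.
have := hconv x y t ht; rewrite (h_fin _ hx) (h_fin _ hy) -!EFinM -EFinD => hc.
have hz : edom h (t *: x + (1 - t) *: y) by rewrite /edom /=; exact: (le_lt_trans hc (ltry _)).
split => //; by move: hc; rewrite (h_fin _ hz) lee_fin.
Qed.

Lemma grad_dir x v : differentiable hf x -> 'D_v hf x = dotv (gr x) v.
Proof.
move=> hd; rewrite deriveE // {1}(row_sum_delta v) linear_sum /dotv.
apply: eq_bigr => i _; rewrite linearZ /= -deriveE // /gr /grad mxE mulrC.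
by [].
Qed.

Lemma dq_cvg x v : differentiable hf x ->
  (fun s => (hf (x + s *: v) - hf x) / s) @ 0^'+ --> dotv (gr x) v.
Proof.
move=> hd; rewrite -grad_dir //.
have hv : derivable hf x v := diff_derivable hd.
have H : (fun s => s^-1 *: ((hf \o shift x) (s *: v) - hf x)) @ 0^' --> 'D_v hf x := hv.
have H2 : (fun s => s^-1 *: ((hf \o shift x) (s *: v) - hf x)) @ 0^'+ --> 'D_v hf x.
  exact: cvg_dnbhs_at_right.
apply: (cvg_trans _ H2); apply: near_eq_cvg; near=> s => /=.
by rewrite [s *: v + x]addrC mulrC.
Unshelve. all: by end_near.
Qed.

Lemma dq_le x v B : differentiable hf x ->
  (forall s, 0 < s < 1 -> (hf (x + s *: v) - hf x) / s <= B) -> dotv (gr x) v <= B.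
Proof.
move=> hd hB; have hc := dq_cvg x v hd.
rewrite -(cvg_lim _ hc) //; apply: limr_le; first by apply/cvg_ex; eexists; exact: hc.
near=> s; apply: hB; apply/andP; split.
  by near: s; exact: nbhs_right_gt.
by near: s; exact: nbhs_right_lt ltr01.
Unshelve. all: by end_near.
Qed.

Lemma dq_ge x v B : differentiable hf x ->
  (forall s, 0 < s < 1 -> B <= (hf (x + s *: v) - hf x) / s) -> B <= dotv (gr x) v.
Proof.
move=> hd hB; have hc := dq_cvg x v hd.
rewrite -(cvg_lim _ hc) //; apply: limr_ge; first by apply/cvg_ex; eexists; exact: hc.
near=> s; apply: hB; apply/andP; split.
  by near: s; exact: nbhs_right_gt.
by near: s; exact: nbhs_right_lt ltr01.
Unshelve. all: by end_near.
Qed.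

Lemma rint_diff x : rint_dom h x -> differentiable hf x.
Proof. by case: hleg => _ _ _ [_ hd _] _; exact: hd. Qed.

Lemma rint_edom x : rint_dom h x -> edom h x.
Proof. exact: interior_subset. Qed.

Arguments rint_edom {x}.
Arguments rint_diff {x}.

Lemma comb_eq (x z : 'rV[R]_m) (s : R) : x + s *: (z - x) = s *: z + (1 - s) *: x.
Proof. apply/rowP => a; rewrite !mxE; ring. Qed.

Lemma grad_ineq x z : rint_dom h x -> edom h z ->
  hf x + dotv (gr x) (z - x) <= hf z.
Proof.
move=> hx hz; rewrite -lerBrDl; apply: dq_le; first exact: rint_diff.
move=> s /andP[s0 s1].
have [_ hc] := convex_real z x s hz (rint_edom hx) (introT andP (conj s0 s1)).
rewrite comb_eq ler_pdivrMr //; lra.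
Qed.

Arguments grad_ineq {x z}.

Lemma bregman_eq p q : bregman h p q = hf p - hf q - dotv (gr q) (p - q).
Proof.
rewrite /bregman /dotv; congr (_ - _); apply: eq_bigr => i _; by rewrite /gr !mxE.
Qed.

Lemma bregman_ge0 p q : rint_dom h q -> edom h p -> 0 <= bregman h p q.
Proof.
move=> hq hp; have := grad_ineq hq hp; rewrite bregman_eq; lra.
Qed.

Lemma bregman_self p : bregman h p p = 0.
Proof.
rewrite /bregman subrr big1 ?subr0 // => i _; by rewrite subrr mulr0.
Qed.

Lemma dotv_wB (w1 w2 : 'I_m -> R) v :
  dotv (fun a => w1 a - w2 a) v = dotv w1 v - dotv w2 v.
Proof. rewrite /dotv -sumrB; apply: eq_bigr => a _; ring. Qed.

Lemma dotv1 v : dotv (fun=> 1) v = \sum_a v ord0 a.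
Proof. by rewrite /dotv; under eq_bigr do rewrite mul1r. Qed.

Lemma simplex_comb (x p : 'rV[R]_m) (s : R) : in_simplex x -> in_simplex p -> 0 <= s <= 1 ->
  in_simplex (x + s *: (p - x)).
Proof.
move=> [hx0 hx1] [hp0 hp1] /andP[s0 s1]; split.
  move=> a; rewrite !mxE.
  have := hx0 a; have := hp0 a => h1 h2.
  have -> : x ord0 a + s * (p ord0 a - x ord0 a) = (1 - s) * x ord0 a + s * p ord0 a by ring.
  apply: addr_ge0; apply: mulr_ge0 => //; by rewrite subr_ge0.
by rewrite -dotv1 dotv_lin dotv_B !dotv1 hx1 hp1 subrr mulr0 addr0.
Qed.

Lemma rsimplex_comb (x y : 'rV[R]_m) (t : R) : in_simplex x -> in_rint_simplex y -> 0 < t <= 1 ->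
  in_rint_simplex (x + t *: (y - x)).
Proof.
move=> hx [hy hyp] /andP[t0 t1]; split.
  apply: simplex_comb => //; by rewrite ltW.
move=> a; rewrite !mxE.
have := hx.1 a; have := hyp a => h1 h2.
have -> : x ord0 a + t * (y ord0 a - x ord0 a) = (1 - t) * x ord0 a + t * y ord0 a by ring.
apply: ltr_wpDl; first by apply: mulr_ge0 => //; rewrite subr_ge0.
exact: mulr_gt0.
Qed.

Arguments simplex_comb {x p s}.
Arguments rsimplex_comb {x y t}.

Lemma mx_le (M : 'rV[R]_m) K : 0 <= K -> (forall j, `|M ord0 j| <= K) -> `|M| <= K.
Proof.
move=> K0 hK; change (mx_norm M <= K).
have [/eqP h0|/mx_norm_neq0 [[i j] ->]] := boolP (mx_norm M == 0); first by rewrite h0.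
by rewrite (ord1 i); exact: hK.
Qed.

Lemma interior_dirs y : rint_dom h y -> exists2 r, 0 < r &
  forall i, edom h (y + r *: delta_mx ord0 i) /\ edom h (y + (- r) *: delta_mx ord0 i).
Proof.
move=> hy; have := hy; rewrite /rint_dom /interior /= => /nbhs_ballP [e e0 he].
exists (e / 2); first by rewrite divr_gt0.
have hb : forall s, `|s| < e -> forall i, edom h (y + s *: delta_mx ord0 i).
  move=> s hs i; apply: he; rewrite -ball_normE /= opprD addrA subrr add0r normrN normrZ.
  apply: le_lt_trans hs; rewrite -[X in _ <= X]mulr1; apply: ler_wpM2l => //.
  apply: mx_le => // j; rewrite mxE; case: (_ && _) => /=; by rewrite ?normr1 ?normr0.
move=> i; split; apply: hb; rewrite ?normrN ger0_norm ?divr_ge0 ?ltW //;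
  by rewrite ltr_pdivrMr // ltr_pMr // ltr1n.
Qed.

Section Prox.
Variables (q : 'I_m -> R) (pk : 'rV[R]_m).
Definition wq := fun a => q a - gr pk a.
Definition Gp p := dotv q p + bregman h p pk.

Lemma G_eq p : Gp p = dotv wq p + hf p - hf pk + dotv (gr pk) pk.
Proof. rewrite /Gp bregman_eq /wq dotv_wB dotv_B; ring. Qed.

Variable pp : 'rV[R]_m.
Hypothesis hpp : in_simplex pp.
Hypothesis hmin : forall p, in_simplex p -> Gp pp <= Gp p.
Hypothesis hdom : forall p, in_simplex p -> edom h p.

Lemma FO p : rint_dom h pp -> in_simplex p ->
  - dotv wq (p - pp) <= dotv (gr pp) (p - pp).
Proof.
move=> hr hp; apply: dq_ge; first exact: rint_diff.
move=> s /andP[s0 s1].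
have hs := hmin _ (simplex_comb hpp hp (introT andP (conj (ltW s0) (ltW s1)))).
rewrite !G_eq dotv_lin in hs.
rewrite ler_pdivlMr //; lra.
Qed.

Lemma TP p : rint_dom h pp -> in_simplex p -> Gp pp <= Gp p - bregman h p pp.
Proof.
move=> hr hp; have := FO p hr hp; rewrite !G_eq bregman_eq dotv_B => hf0.
lra.
Qed.

Hypothesis hrint : forall p, in_rint_simplex p -> rint_dom h p.

Lemma INT (y : 'rV[R]_m) : in_rint_simplex y -> rint_dom h pp.
Proof.
move=> hy; apply: contrapT => hn.
have [r r0 hdir] := interior_dirs y (hrint y hy).
pose L := dotv wq (y - pp).
pose M := \sum_i (`|hf (y + r *: delta_mx ord0 i)| + `|hf (y + (- r) *: delta_mx ord0 i)|).
pose C := M - hf pp + L.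
pose K := `|C / r|.
have hM1 : forall j, hf (y + r *: delta_mx ord0 j) <= M.
  move=> j; apply: le_trans (ler_norm _) _; rewrite /M (bigD1 j) //=.
  rewrite -addrA lerDl; apply: addr_ge0 => //; apply: sumr_ge0 => *; exact: addr_ge0.
have hM2 : forall j, hf (y + (- r) *: delta_mx ord0 j) <= M.
  move=> j; apply: le_trans (ler_norm _) _; rewrite /M (bigD1 j) //=.
  rewrite -addrA addrCA lerDl; apply: addr_ge0 => //; apply: sumr_ge0 => *; exact: addr_ge0.
have bound : forall t, 0 < t < 1 -> forall j, `|gr (pp + t *: (y - pp)) j| <= K.
  move=> t /andP[t0 t1] j.
  set xt := pp + t *: (y - pp).
  have hxt : in_rint_simplex xt by apply: rsimplex_comb => //; rewrite t0 ltW.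
  have hxr := hrint xt hxt.
  have ha := grad_ineq hxr (hdom _ hpp).
  have hb := hmin _ hxt.1; rewrite !G_eq dotv_lin -/L in hb.
  rewrite /xt !dotv_B !dotv_lin !dotv_B -/xt in ha.
  set a := dotv (gr xt) y in ha *.
  set b := dotv (gr xt) pp in ha *.
  have hD : - L <= a - b.
    rewrite -(ler_pM2l t0); lra.
  have h1t : (1 - t) * (- L) <= (1 - t) * (a - b).
    apply: ler_wpM2l => //; by rewrite subr_ge0 ltW.
  have key : forall s, edom h (y + s *: delta_mx ord0 j) ->
      s * gr xt j <= hf (y + s *: delta_mx ord0 j) - hf pp + L.
    move=> s hz; have hc := grad_ineq hxr hz.
    rewrite /xt !dotv_B !dotv_lin !dotv_B dotv_delta -/xt -/a -/b in hc.
    lra.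
  have k1 := key r (hdir j).1.
  have k2 := key (- r) (hdir j).2.
  have hC1 : r * gr xt j <= C by rewrite /C; have := hM1 j; lra.
  have hC2 : - (r * gr xt j) <= C by rewrite /C; have := hM2 j; lra.
  apply: le_trans (ler_norm _); rewrite ler_norml; apply/andP; split.
    rewrite lerNl ler_pdivlMr //; lra.
  rewrite ler_pdivlMr //; lra.
pose tn := fun n : nat => (2^-1 : R) ^+ n.+1.
have tn0 : forall n, 0 < tn n < 1 by move=> n; exact: half_pow.
pose xs := fun n => pp + tn n *: (y - pp).
have hxs : xs @ \oo --> pp.
  have -> : pp = pp + 0 *: (y - pp) by rewrite scale0r addr0.
  apply: cvgD; first exact: cvg_cst.
  apply: cvgZr_tmp; rewrite /tn; rewrite (cvg_shiftS (fun n => (2^-1 : R) ^+ n)).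
  by apply: cvg_expr; rewrite ger0_norm ?invr_ge0 // invf_lt1 // ltr1n.
have hrn : forall n, rint_dom h (xs n).
  move=> n; apply: hrint; apply: rsimplex_comb => //.
  by case/andP: (tn0 n) => ? ?; apply/andP; split => //; exact: ltW.
have hcl : closure (rint_dom h) pp.
  have hA : \forall n \near \oo, closure (rint_dom h) (xs n).
    by apply: nearW => n; apply: subset_closure; exact: hrn.
  have := @closed_cvg _ _ _ _ xs (closure (rint_dom h)) (@closed_closure _ _) hA pp.
  by apply.
case: hleg => _ _ _ [_ _ hes] _.
have hinf := hes xs pp hrn hxs hcl hn.
move/cvgryPgt : hinf => /(_ K) [N _ hN].
have := hN N (leqnn N); rewrite ltNge; apply/negP/negPn.
apply: mx_le; first exact: normr_ge0.
move=> j; exact: (bound _ (tn0 N) j).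
Qed.

End Prox.

End Convex.

Lemma GpQ (R : realType) (S : finType) (m : nat) (P : S -> 'I_m -> S -> R)
  (c : S -> 'I_m -> R) (gamma : R) (h : 'rV[R]_m -> \bar R) (eta : R)
  (pol : S -> 'rV[R]_m) (s : S) (pk p : 'rV[R]_m) :
  Gp R m h (fun a => eta * Qsa P c gamma pol s a) pk p
  = eta * Qdot P c gamma pol s p + bregman h p pk.
Proof.
rewrite /Gp /dotv /Qdot mulr_sumr; congr (_ + _); apply: eq_bigr => a _; by rewrite mulrA.
Qed.

Lemma sum_alg (S : finType) (R : realType) (d A B C E : S -> R) (eta : R) :
  \sum_y d y * ((A y - B y) / eta + (C y - E y))
  = (\sum_y d y * A y - \sum_y d y * B y) / eta + (\sum_y d y * C y - \sum_y d y * E y).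
Proof.
rewrite (eq_bigr (fun y => (d y * A y - d y * B y) * eta^-1 + (d y * C y - d y * E y))); last first.
  by move=> y _; ring.
by rewrite big_split /= -mulr_suml !sumrB.
Qed.

Theorem theorem8 (R : realType) (S : finType) (m : nat)
  (P : S -> 'I_m -> S -> R) (c : S -> 'I_m -> R) (gamma : R)
  (h : 'rV[R]_m -> \bar R) (eta : R) (pi : nat -> S -> 'rV[R]_m)
  (pistar : S -> 'rV[R]_m) :
  is_MDP P c gamma ->
  legendre h ->
  (forall p : 'rV[R]_m, in_simplex p -> edom h p) ->
  (forall p : 'rV[R]_m, in_rint_simplex p -> rint_dom h p) ->
  is_optimal_policy P c gamma pistar ->
  0 < eta ->
  is_rint_policy (pi 0%N) ->
  is_PMD_sequence P c gamma h (fun _ => eta) pi ->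
  forall rho : S -> R, is_state_distr rho ->
  forall k : nat,
    Vrho P c gamma rho (pi k) - Vstar P c gamma rho
    <= (k.+1%:R)^-1 *
       (Dstar P gamma h rho pistar (pi 0%N) / (eta * (1 - gamma))
        + 1 / (1 - gamma) ^+ 2).
Proof.
move=> [HP0 HP1 Hc /andP[Hg0 Hg1]] hleg hdom hrint hopt heta hpi0 hpmd rho [hrho0 hrho1] K.
have hg : 0 < 1 - gamma by rewrite subr_gt0.
have hpstar : is_policy pistar := hopt.1.
have hmin : forall k s p, in_simplex p ->
    Gp R m h (fun a => eta * Qsa P c gamma (pi k) s a) (pi k s) (pi k.+1 s)
    <= Gp R m h (fun a => eta * Qsa P c gamma (pi k) s a) (pi k s) p.
  by move=> k s p hp; rewrite !GpQ; exact: (hpmd k s).2 p hp.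
have inv : forall k, is_policy (pi k) /\ (forall s, rint_dom h (pi k s)).
  elim=> [|k [hk hkr]].
    by split => s; [exact: (hpi0 s).1 | exact: hrint _ (hpi0 s)].
  have hk1 : is_policy (pi k.+1) by move=> s; exact: (hpmd k s).1.
  split => // s.
  exact: (@INT R m h hleg (fun a => eta * Qsa P c gamma (pi k) s a) (pi k s) (pi k.+1 s)
     (hk1 s) (hmin k s) hdom hrint (pi 0%N s) (hpi0 s)).
have pol : forall k, is_policy (pi k) by move=> k; exact: (inv k).1.
have rin : forall k s, rint_dom h (pi k s) by move=> k; exact: (inv k).2.
have improve : forall k s, Qdot P c gamma (pi k) s (pi k.+1 s) <= Vs P c gamma (pi k) s.
  move=> k s; have [_ hm] := hpmd k s; have := hm (pi k s) (pol k s).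
  rewrite bregman_self (@Qdot_self _ _ _ P c gamma HP0 HP1 Hc Hg0 Hg1 (pi k) s (pol k)) => H.
  have hb := @bregman_ge0 R m h hleg (pi k.+1 s) (pi k s) (rin k s) (hdom _ (pol k.+1 s)).
  rewrite -(ler_pM2l heta); lra.
have adv_np : forall k y, Adv R S m P c gamma (pi k) (pi k.+1) y <= 0.
  by move=> k y; rewrite /Adv; have := improve k y; lra.
have vstep : forall k x, Vs P c gamma (pi k.+1) x - Vs P c gamma (pi k) x
    <= Adv R S m P c gamma (pi k) (pi k.+1) x.
  move=> k x; exact: (@pdl_nonpos R S m P c gamma HP0 HP1 Hc Hg0 Hg1 (pi k) (pi k.+1)
      (pol k) (pol k.+1) x (adv_np k)).
have perS : forall k s, Vs P c gamma (pi k) s - Qdot P c gamma (pi k) s (pistar s)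
    <= (bregman h (pistar s) (pi k s) - bregman h (pistar s) (pi k.+1 s)) / eta
       + (Vs P c gamma (pi k) s - Vs P c gamma (pi k.+1) s).
  move=> k s.
  have htp := @TP R m h hleg (fun a => eta * Qsa P c gamma (pi k) s a) (pi k s) (pi k.+1 s)
     (pol k.+1 s) (hmin k s) (pistar s) (rin k.+1 s) (hpstar s).
  rewrite !GpQ in htp.
  have hb := @bregman_ge0 R m h hleg (pi k.+1 s) (pi k s) (rin k s) (hdom _ (pol k.+1 s)).
  have hv := vstep k s; rewrite /Adv in hv.
  have h1 : eta * Vs P c gamma (pi k.+1) s <= eta * Qdot P c gamma (pi k) s (pi k.+1 s).
    by rewrite ler_pM2l //; lra.
  have h2 : Vs P c gamma (pi k.+1) s - Qdot P c gamma (pi k) s (pistar s)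
      <= (bregman h (pistar s) (pi k s) - bregman h (pistar s) (pi k.+1 s)) / eta.
    rewrite ler_pdivlMr //; lra.
  lra.
have d0 : forall y, 0 <= dvisit_rho P gamma pistar rho y.
  move=> y; apply: sumr_ge0 => s _; apply: mulr_ge0 => //.
  exact: (@dvisit_ge0 R S m P gamma HP0 HP1 Hg0 Hg1 pistar hpstar).
have dsum : \sum_y dvisit_rho P gamma pistar rho y <= 1.
  rewrite /dvisit_rho exchange_big /= -hrho1; apply: ler_sum => s _.
  rewrite -mulr_sumr -[X in _ <= X]mulr1; apply: ler_wpM2l => //.
  exact: (@dvisit_sum R S m P gamma HP0 HP1 Hg0 Hg1 pistar hpstar).
pose W k := \sum_y dvisit_rho P gamma pistar rho y * Vs P c gamma (pi k) y.
have perK : forall k, (1 - gamma) * (Vrho P c gamma rho (pi k) - Vrho P c gamma rho pistar)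
    <= (Dstar P gamma h rho pistar (pi k) - Dstar P gamma h rho pistar (pi k.+1)) / eta
       + (W k - W k.+1).
  move=> k.
  have hpdl := @pdl_avg R S m P c gamma HP0 HP1 Hc Hg0 Hg1 (pi k) pistar (pol k) hpstar rho.
  have eqL : (1 - gamma) * (Vrho P c gamma rho (pi k) - Vrho P c gamma rho pistar)
      = \sum_y dvisit_rho P gamma pistar rho y
          * (Vs P c gamma (pi k) y - Qdot P c gamma (pi k) y (pistar y)).
    have -> : Vrho P c gamma rho (pi k) - Vrho P c gamma rho pistar
        = - \sum_s rho s * (Vs P c gamma pistar s - Vs P c gamma (pi k) s).
      rewrite /Vrho -sumrB -sumrN; apply: eq_bigr => s _; ring.
    rewrite mulrN hpdl -sumrN; apply: eq_bigr => y _; rewrite /Adv; ring.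
  rewrite eqL /Dstar /W -sum_alg; apply: ler_sum => y _.
  apply: ler_wpM2l; [exact: d0 | exact: perS].
have tele : forall n, (1 - gamma) * \sum_(0 <= k < n)
      (Vrho P c gamma rho (pi k) - Vrho P c gamma rho pistar)
    <= (Dstar P gamma h rho pistar (pi 0%N) - Dstar P gamma h rho pistar (pi n)) / eta
       + (W 0%N - W n).
  elim=> [|n IH]; first by rewrite big_geq // mulr0 !subrr mul0r addr0.
  rewrite big_nat_recr //= mulrDr; have := perK n; lra.
have vrdec : forall k, Vrho P c gamma rho (pi k.+1) <= Vrho P c gamma rho (pi k).
  move=> k; apply: ler_sum => s _; apply: ler_wpM2l => //.
  have := vstep k s; have := adv_np k s; lra.
have vrmono : forall k n, (k <= n)%N -> Vrho P c gamma rho (pi n) <= Vrho P c gamma rho (pi k).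
  move=> k; elim=> [|n IH]; first by rewrite leqn0 => /eqP ->.
  rewrite leq_eqVlt => /orP[/eqP -> //|hk].
  exact: le_trans (vrdec n) (IH hk).
have hsum : (K.+1)%:R * (Vrho P c gamma rho (pi K) - Vrho P c gamma rho pistar)
    <= \sum_(0 <= k < K.+1) (Vrho P c gamma rho (pi k) - Vrho P c gamma rho pistar).
  apply: (@le_trans _ _ (\sum_(0 <= k < K.+1)
      (Vrho P c gamma rho (pi K) - Vrho P c gamma rho pistar))).
    by rewrite sumr_const_nat subn0 mulr_natl.
  apply: ler_sum_nat => k /andP[_ hk]; rewrite lerD2r; exact: vrmono.
have Vst_le : Vrho P c gamma rho pistar <= Vstar P c gamma rho.
  rewrite /Vstar; apply: lb_le_inf.
    by exists (Vrho P c gamma rho pistar); exists pistar.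
  move=> _ [pol' hp <-]; apply: ler_sum => s _; apply: ler_wpM2l => //.
  exact: hopt.2 pol' hp s.
have Ds_ge0 : 0 <= Dstar P gamma h rho pistar (pi K.+1).
  apply: sumr_ge0 => s _; apply: mulr_ge0; first exact: d0.
  exact: (@bregman_ge0 R m h hleg _ _ (rin K.+1 s) (hdom _ (hpstar s))).
have W_ge0 : 0 <= W K.+1.
  apply: sumr_ge0 => y _; apply: mulr_ge0; first exact: d0.
  exact: (@Vs_ge0 R S m P c gamma HP0 HP1 Hc Hg0 Hg1 (pi K.+1) (pol K.+1)).
have W0_le : W 0%N <= 1 / (1 - gamma).
  apply: (@le_trans _ _ (\sum_y dvisit_rho P gamma pistar rho y * (1 / (1 - gamma)))).
    apply: ler_sum => y _; apply: ler_wpM2l; first exact: d0.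
    exact: (@Vs_le R S m P c gamma HP0 HP1 Hc Hg0 Hg1 (pi 0%N) (pol 0%N)).
  rewrite -mulr_suml -[X in _ <= X]mul1r; apply: ler_wpM2r => //.
  by rewrite divr_ge0 // ltW.
have T := tele K.+1.
have Dd : 0 <= Dstar P gamma h rho pistar (pi K.+1) / eta by rewrite divr_ge0 // ltW.
have hs : (1 - gamma) * ((K.+1)%:R * (Vrho P c gamma rho (pi K) - Vrho P c gamma rho pistar))
    <= (1 - gamma) * \sum_(0 <= k < K.+1)
      (Vrho P c gamma rho (pi k) - Vrho P c gamma rho pistar).
  by apply: ler_wpM2l => //; exact: ltW.
set E := Vrho P c gamma rho (pi K) - Vrho P c gamma rho pistar in hs hsum.
set D0 := Dstar P gamma h rho pistar (pi 0%N) in T *.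
have eqX : D0 / (eta * (1 - gamma)) + 1 / (1 - gamma) ^+ 2
    = (D0 / eta + 1 / (1 - gamma)) / (1 - gamma).
  by field; apply/andP; split; rewrite ?lt0r_neq0 //.
rewrite eqX.
apply: (@le_trans _ _ E); first by rewrite /E; lra.
rewrite ler_pdivlMl ?ltr0Sn // ler_pdivlMr //.
have hK0 : 0 <= (K.+1)%:R :> R by exact: ler0n.
lra.
Qed.
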